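(* Let $M>0$ and $\alpha>0$. There exist $\varepsilon_0>0$ and $l\in\mathbb N$ such that the following holds. Let $\varepsilon<\varepsilon_0$, $S\in\mathcal A(M,\varepsilon,\alpha)$, and let $T=\phi(j_1,\dots,j_m)(L)$ be an $m$-block of $C_S$. Let $F:T\to L$ be a $C^1$ map with nonvanishing derivative and $\mathcal N(F)<1/2$, such that $F$ maps each connected component of $T\setminus C_S$ onto a connected component of $L\setminus C_S$, and suppose there is a gap $\phi(j_1,\dots,j_m,i_1,\dots,i_p)(J_i)\subset T$ of level $m+p$ with $F\big(\phi(j_1,\dots,j_m,i_1,\dots,i_p)(J_i)\big)=J_j$ for some $1\le i,j\le k-1$. Then $p\le l$.
   Context: Setting: $k\ge2$; $I_1,\dots,I_k$ pairwise disjoint compact intervals in $[0,1)$ ordered left to right; $L\subset[0,1)$ compact interval containing $I=I_1\cup\dots\cup I_k$. $\mathcal S^{r}(I_1,\dots,I_k,L)$: $C^r$ maps $S:I\to L$ with $S(I_j)=L$ for all $j$ and $|S'|>1$; $C_S=\{x\in I:S^n(x)\in I\ \forall n\ge1\}$. For a $C^1$ map $F$ with nonvanishing derivative on an interval $T$, $\mathcal N(F)=\sup_{x,y\in T}\log\frac{|F'(x)|}{|F'(y)|}$; for $S$, $\mathcal N(S)=\max_j\sup_{x,y\in I_j}\log\frac{|S'(x)|}{|S'(y)|}$. $\mathcal A(M,\varepsilon,\alpha)$ is the set of $S\in\mathcal S^{1+\alpha}(I_1,\dots,I_k,L)$ with $\mathcal N(S)<\varepsilon$ and $|\log\frac{|S'(x)|}{|S'(y)|}|\le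 M|x-y|^\alpha$ for $x,y$ in a common $I_j$. Inverse branches $\phi_i=(S|_{I_i})^{-1}$, $\phi(i_1,\dots,i_m)=\phi_{i_1}\circ\dots\circ\phi_{i_m}$; $\phi(i_1,\dots,i_m)(L)$ is an $m$-block. $J_i$ ($1\le i\le k-1$) is the open interval between $I_i$ and $I_{i+1}$; $\phi(i_1,\dots,i_r)(J_i)$ is a gap of level $r$. *)

(* Defs.v *)
From Stdlib Require Import Reals List.
Open Scope R_scope.

(* Derivative of f at x, computed within the set D (one-sided at endpoints). *)
Definition deriv_within (D : R -> Prop) (f : R -> R) (x l : R) : Prop :=
  forall eps, 0 < eps -> exists delta, 0 < delta /\
    forall y, D y -> y <> x -> Rabs (y - x) < delta ->
      Rabs ((f y - f x) / (y - x) - l) < eps.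

Definition cont_within (D : R -> Prop) (f : R -> R) (x : R) : Prop :=
  forall eps, 0 < eps -> exists delta, 0 < delta /\
    forall y, D y -> Rabs (y - x) < delta -> Rabs (f y - f x) < eps.

Definition C1_on (D : R -> Prop) (f df : R -> R) : Prop :=
  (forall x, D x -> deriv_within D f x (df x)) /\
  (forall x, D x -> cont_within D df x).

Definition Icc (u v : R) : R -> Prop := fun x => u <= x <= v.

(* the j-th interval I_j = [a j, b j]; indices 1..k *)
Definition Ij (a b : nat -> R) (j : nat) : R -> Prop := Icc (a j) (b j).

Definition Iunion (k : nat) (a b : nat -> R) : R -> Prop :=
  fun x => exists j, (1 <= j <= k)%nat /\ Ij a b j x.

Definition Jgap (a b : nat -> R) (i : nat) : R -> Prop :=
  fun x => b i < x < a (S i).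

Definition setting (k : nat) (a b : nat -> R) (c d : R) : Prop :=
  (2 <= k)%nat /\
  (forall j, (1 <= j <= k)%nat -> a j < b j) /\
  (forall j, (1 <= j < k)%nat -> b j < a (S j)) /\
  0 <= a 1%nat /\ b k < 1 /\
  0 <= c /\ c <= d /\ d < 1 /\
  (forall j, (1 <= j <= k)%nat -> c <= a j /\ b j <= d).

Definition maps_onto (f : R -> R) (A B : R -> Prop) : Prop :=
  forall y, B y <-> exists x, A x /\ f x = y.

(* S : I -> L, S is C^{1+alpha} on each I_j, S(I_j) = L, |S'| > 1;
   dS is the derivative of S. *)
Definition in_class_S (k : nat) (a b : nat -> R) (c d alpha : R)
    (S dS : R -> R) : Prop :=
  (forall j, (1 <= j <= k)%nat ->
     C1_on (Ij a b j) S dS /\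
     (exists C, forall x y, Ij a b j x -> Ij a b j y -> x <> y ->
        Rabs (dS x - dS y) <= C * Rpower (Rabs (x - y)) alpha) /\
     maps_onto S (Ij a b j) (Icc c d) /\
     (forall x, Ij a b j x -> 1 < Rabs (dS x))).

(* N(S) < eps, i.e. the supremum of the distortion is < eps *)
Definition distortion_lt (k : nat) (a b : nat -> R) (dS : R -> R) (eps : R) : Prop :=
  exists s, s < eps /\
    forall j x y, (1 <= j <= k)%nat -> Ij a b j x -> Ij a b j y ->
      ln (Rabs (dS x) / Rabs (dS y)) <= s.

Definition in_class_A (k : nat) (a b : nat -> R) (c d M eps alpha : R)
    (S dS : R -> R) : Prop :=
  in_class_S k a b c d alpha S dS /\
  distortion_lt k a b dS eps /\
  (forall j x y, (1 <= j <= k)%nat -> Ij a b j x -> Ij a b j y -> x <> y ->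
     Rabs (ln (Rabs (dS x) / Rabs (dS y))) <= M * Rpower (Rabs (x - y)) alpha).

Definition CS (k : nat) (a b : nat -> R) (S : R -> R) : R -> Prop :=
  fun x => Iunion k a b x /\
    forall n, (1 <= n)%nat -> Iunion k a b (Nat.iter n S x).

(* phi_i(A) for A ⊆ L: image of A under the inverse branch (S|_{I_i})^{-1},
   i.e. { x ∈ I_i : S x ∈ A } *)
Definition branch_img (a b : nat -> R) (S : R -> R) (i : nat) (A : R -> Prop)
  : R -> Prop := fun x => Ij a b i x /\ A (S x).

(* phi(i_1,...,i_m)(A) = phi_{i_1} ∘ ... ∘ phi_{i_m} (A) *)
Definition word_img (a b : nat -> R) (S : R -> R) (w : list nat) (A : R -> Prop)
  : R -> Prop := fold_right (branch_img a b S) A w.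

Definition valid_word (k : nat) (w : list nat) : Prop :=
  Forall (fun i => (1 <= i <= k)%nat) w.

Definition convex (A : R -> Prop) : Prop :=
  forall x y z, A x -> A z -> x <= y <= z -> A y.

Definition conn_comp (X C : R -> Prop) : Prop :=
  (exists x, C x) /\ convex C /\ (forall x, C x -> X x) /\
  (forall D, convex D -> (forall x, C x -> D x) -> (forall x, D x -> X x) ->
     forall x, D x -> C x).

Definition setminus (X Y : R -> Prop) : R -> Prop := fun x => X x /\ ~ Y x.

Definition subset (X Y : R -> Prop) : Prop := forall x, X x -> Y x.

(* Main.v *)
Require Import Defs.
From Stdlib Require Import Reals Lra Lia List.
From Coquelicot Require Coquelicot.
Open Scope R_scope.

Definition clamp (x y z : R) := Rmax x (Rmin y z).

Lemma clamp_in x y z : x <= y -> x <= clamp x y z <= y.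
Proof. intros; unfold clamp, Rmax, Rmin; repeat destruct Rle_dec; lra. Qed.

Lemma clamp_id x y z : x <= z <= y -> clamp x y z = z.
Proof. intros; unfold clamp, Rmax, Rmin; repeat destruct Rle_dec; lra. Qed.

Lemma clamp_lip x y z1 z2 : x <= y -> Rabs (clamp x y z1 - clamp x y z2) <= Rabs (z1 - z2).
Proof. intros; unfold clamp, Rmax, Rmin; repeat destruct Rle_dec;
  repeat (unfold Rabs; destruct Rcase_abs); lra. Qed.

Lemma deriv_cont D f x l : deriv_within D f x l -> cont_within D f x.
Proof.
  intros H eps Heps.
  destruct (H 1 Rlt_0_1) as [d [Hd Hq]].
  exists (Rmin d (eps / (Rabs l + 1))). split.
  { apply Rmin_pos; auto. apply Rdiv_lt_0_compat; auto. pose proof (Rabs_pos l); lra. }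
  intros y Dy Hy.
  destruct (Req_dec y x) as [->|Hne]. { rewrite Rminus_diag, Rabs_R0; auto. }
  assert (Hyx : y - x <> 0) by lra.
  specialize (Hq y Dy Hne (Rlt_le_trans _ _ _ Hy (Rmin_l _ _))).
  assert (Hy2 := Rlt_le_trans _ _ _ Hy (Rmin_r _ _)).
  replace (f y - f x) with ((f y - f x) / (y - x) * (y - x)) by (field; auto).
  rewrite Rabs_mult.
  assert (Rabs ((f y - f x) / (y - x)) <= Rabs l + 1).
  { pose proof (Rabs_triang_inv ((f y - f x) / (y - x)) l). lra. }
  assert (Hp : 0 < Rabs l + 1) by (pose proof (Rabs_pos l); lra).
  apply Rle_lt_trans with ((Rabs l + 1) * Rabs (y - x)).
  { apply Rmult_le_compat_r; auto. apply Rabs_pos. }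
  apply Rlt_le_trans with ((Rabs l + 1) * (eps / (Rabs l + 1))).
  { apply Rmult_lt_compat_l; auto. }
  right; field; lra.
Qed.

Lemma clamp_cont D f x y t0 : x <= y -> (forall z, x <= z <= y -> D z) ->
  (forall z, x <= z <= y -> cont_within D f z) ->
  continuity_pt (fun t => f (clamp x y t)) t0.
Proof.
  intros Hxy HD Hc.
  unfold continuity_pt, continue_in, limit1_in, limit_in; simpl; unfold R_dist.
  intros eps Heps.
  pose proof (clamp_in x y t0 Hxy) as Hin.
  destruct (Hc _ Hin eps Heps) as [d [Hd H]].
  exists d; split; auto.
  intros t [_ Ht].
  apply H. apply HD, clamp_in; auto.
  eapply Rle_lt_trans; [apply clamp_lip; auto|]. auto.
Qed.

Lemma mvt_D (D : R -> Prop) f df x y : x < y -> (forall z, x <= z <= y -> D z) ->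
  (forall z, D z -> deriv_within D f z (df z)) ->
  exists c, x <= c <= y /\ f y - f x = df c * (y - x).
Proof.
  intros Hxy HD Hd.
  set (g := fun t => f (clamp x y t)).
  destruct (Coquelicot.Derive.MVT_gen g x y df) as [c [Hc Heq]].
  - rewrite Rmin_left, Rmax_right by lra. intros z Hz.
    apply (proj2 (Coquelicot.Derive.is_derive_Reals _ _ _)).
    intros eps Heps.
    destruct (Hd z (HD z ltac:(lra)) eps Heps) as [d0 [Hd0 H0]].
    assert (Hpos : 0 < Rmin d0 (Rmin (z - x) (y - z))).
    { repeat apply Rmin_pos; lra. }
    exists (mkposreal _ Hpos). simpl. intros h Hh Hha.
    unfold g. rewrite !clamp_id.
    2: lra.
    2: { pose proof (Rmin_r d0 (Rmin (z - x) (y - z))).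
         pose proof (Rmin_l (z - x) (y - z)). pose proof (Rmin_r (z - x) (y - z)).
         revert Hha; unfold Rabs; destruct Rcase_abs; lra. }
    pose proof (Rmin_l d0 (Rmin (z - x) (y - z))).
    pose proof (Rmin_r d0 (Rmin (z - x) (y - z))).
    pose proof (Rmin_l (z - x) (y - z)). pose proof (Rmin_r (z - x) (y - z)).
    assert (Hzh : x <= z + h <= y) by (revert Hha; unfold Rabs; destruct Rcase_abs; lra).
    specialize (H0 (z + h) (HD _ Hzh) ltac:(lra) ltac:(replace (z + h - z) with h by ring; lra)).
    replace (z + h - z) with h in H0 by ring. auto.
  - rewrite Rmin_left, Rmax_right by lra. intros z Hz.
    apply clamp_cont with D; try lra; auto.
    intros w Hw. apply deriv_cont with (df w). apply Hd, HD; auto.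
  - rewrite Rmin_left, Rmax_right in Hc by lra.
    exists c; split; auto. unfold g in Heq. rewrite !clamp_id in Heq by lra. auto.
Qed.

Lemma ivt_D (D : R -> Prop) f x y : x <= y -> (forall z, x <= z <= y -> D z) ->
  (forall z, x <= z <= y -> cont_within D f z) -> f x * f y <= 0 ->
  exists z, x <= z <= y /\ f z = 0.
Proof.
  intros Hxy HD Hc Hs.
  destruct (IVT_cor (fun t => f (clamp x y t)) x y) as [z [Hz Hfz]]; auto.
  - intro t; apply clamp_cont with D; auto.
  - rewrite !clamp_id by lra; auto.
  - exists z; split; auto. rewrite clamp_id in Hfz by lra; auto.
Qed.

Lemma mvt_abs (D : R -> Prop) f df x y : convex D -> D x -> D y ->
  (forall z, D z -> deriv_within D f z (df z)) ->
  exists c, Rmin x y <= c <= Rmax x y /\ D c /\ Rabs (f y - f x) = Rabs (df c) * Rabs (y - x).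
Proof.
  intros Hc Dx Dy Hd.
  destruct (Rtotal_order x y) as [Hlt|[Heq|Hgt]].
  - destruct (mvt_D D f df x y Hlt) as [c [Hc1 Hc2]]; auto.
    { intros z Hz. apply (Hc x z y); auto. }
    exists c. rewrite Rmin_left, Rmax_right by lra. split; auto. split.
    { apply (Hc x c y); auto. }
    rewrite Hc2, Rabs_mult; auto.
  - subst. exists y. rewrite Rmin_left, Rmax_left by lra. split; [lra|]. split; auto.
    rewrite !Rminus_diag, Rabs_R0; ring.
  - destruct (mvt_D D f df y x Hgt) as [c [Hc1 Hc2]]; auto.
    { intros z Hz. apply (Hc y z x); auto. }
    exists c. rewrite Rmin_right, Rmax_left by lra. split; auto. split.
    { apply (Hc y c x); auto. }
    rewrite <- Rabs_Ropp, Ropp_minus_distr, Hc2, Rabs_mult, <- (Rabs_Ropp (y - x)), Ropp_minus_distr; auto.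
Qed.

Lemma Icc_convex u v : convex (Icc u v).
Proof. intros x y z Hx Hz Hy; unfold Icc in *; lra. Qed.

Lemma sign_const (D : R -> Prop) g : convex D ->
  (forall z, D z -> cont_within D g z) -> (forall z, D z -> g z <> 0) ->
  forall x0, D x0 -> (0 < g x0 -> forall x, D x -> 0 < g x) /\ (g x0 < 0 -> forall x, D x -> g x < 0).
Proof.
  intros Hc Hcont Hnz x0 Dx0.
  assert (K : forall x, D x -> g x0 * g x <= 0 -> False).
  { intros x Dx Hp.
    destruct (Rle_dec x0 x).
    - destruct (ivt_D D g x0 x) as [z [Hz Hgz]]; auto.
      + intros z Hz; apply (Hc x0 z x); auto.
      + intros z Hz; apply Hcont, (Hc x0 z x); auto.
      + apply (Hnz z); auto. apply (Hc x0 z x); auto.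
    - destruct (ivt_D D g x x0) as [z [Hz Hgz]]; auto; try lra.
      + intros z Hz; apply (Hc x z x0); auto.
      + intros z Hz; apply Hcont, (Hc x z x0); auto.
      + apply (Hnz z); auto. apply (Hc x z x0); auto. }
  split; intros H x Dx; pose proof (Hnz x Dx);
    destruct (Rtotal_order 0 (g x)) as [h|[h|h]]; try lra; exfalso; apply (K x Dx); nra.
Qed.

Definition branches (k : nat) (a b : nat -> R) (c d : R) (S dS : R -> R) (lam : R) : Prop :=
  (forall j, (1 <= j <= k)%nat -> C1_on (Ij a b j) S dS) /\
  (forall j, (1 <= j <= k)%nat -> maps_onto S (Ij a b j) (Icc c d)) /\
  (forall j x, (1 <= j <= k)%nat -> Ij a b j x -> lam <= Rabs (dS x)) /\
  1 < lam /\ c < d /\ (forall j, (1 <= j <= k)%nat -> a j <= b j) /\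
  (forall j x, (1 <= j <= k)%nat -> Ij a b j x -> Icc c d x).

Section W.
Context (k : nat) (a b : nat -> R) (c d : R) (S dS : R -> R) (lam : R)
  (HB : branches k a b c d S dS lam).

Lemma Ij_convex j : convex (Ij a b j).
Proof. apply Icc_convex. Qed.

Lemma br_mvt j x y : (1 <= j <= k)%nat -> Ij a b j x -> Ij a b j y ->
  exists z, Rmin x y <= z <= Rmax x y /\ Ij a b j z /\
    Rabs (S y - S x) = Rabs (dS z) * Rabs (y - x).
Proof.
  intros Hj Hx Hy. destruct HB as [H1 _].
  apply mvt_abs; auto. apply Ij_convex. apply (H1 j Hj).
Qed.

Lemma br_exp j x y : (1 <= j <= k)%nat -> Ij a b j x -> Ij a b j y ->
  lam * Rabs (x - y) <= Rabs (S x - S y).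
Proof.
  intros Hj Hx Hy. destruct (br_mvt j y x Hj Hy Hx) as [z [_ [Hz He]]].
  rewrite He. apply Rmult_le_compat_r. apply Rabs_pos.
  destruct HB as [_ [_ [H3 _]]]. apply (H3 j z Hj Hz).
Qed.

Lemma br_mono j : (1 <= j <= k)%nat ->
  (forall x y, Ij a b j x -> Ij a b j y -> x < y -> S x < S y) \/
  (forall x y, Ij a b j x -> Ij a b j y -> x < y -> S y < S x).
Proof.
  intros Hj. destruct HB as [H1 [_ [H3 [H4 [_ [H6 _]]]]]].
  assert (Hnz : forall z, Ij a b j z -> dS z <> 0).
  { intros z Hz E. specialize (H3 j z Hj Hz). rewrite E, Rabs_R0 in H3. lra. }
  destruct (H1 j Hj) as [Hd Hcont].
  assert (Ha : Ij a b j (a j)).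
  { specialize (H6 j Hj). unfold Ij, Icc; lra. }
  destruct (sign_const (Ij a b j) dS (Ij_convex j) Hcont Hnz (a j) Ha) as [Hp Hn].
  destruct (Rlt_or_le 0 (dS (a j))) as [h|h].
  - left. intros x y Hx Hy Hxy.
    destruct (mvt_D (Ij a b j) S dS x y Hxy) as [z [Hz Hz2]]; auto.
    { intros z Hz. apply (Ij_convex j x z y); auto. }
    assert (0 < dS z) by (apply Hp; auto; apply (Ij_convex j x z y); auto).
    nra.
  - right. intros x y Hx Hy Hxy.
    assert (dS (a j) < 0) by (pose proof (Hnz _ Ha); lra).
    destruct (mvt_D (Ij a b j) S dS x y Hxy) as [z [Hz Hz2]]; auto.
    { intros z Hz. apply (Ij_convex j x z y); auto. }
    assert (dS z < 0) by (apply Hn; auto; apply (Ij_convex j x z y); auto).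
    nra.
Qed.

Lemma valid_cons j w : valid_word k (j :: w) -> (1 <= j <= k)%nat /\ valid_word k w.
Proof. intro H. inversion H; subst; auto. Qed.

Lemma word_iter w A x : word_img a b S w A x -> A (Nat.iter (length w) S x).
Proof.
  revert x; induction w as [|j w IH]; intros x H; simpl in *; auto.
  destruct H as [_ H]. specialize (IH _ H). rewrite <- Nat.iter_succ_r in IH. exact IH.
Qed.

Lemma word_mono w (A B : R -> Prop) x : (forall y, A y -> B y) ->
  word_img a b S w A x -> word_img a b S w B x.
Proof.
  revert x; induction w as [|j w IH]; intros x HAB H; simpl in *; auto.
  destruct H as [H1 H2]. split; auto.
Qed.

Lemma word_in_L w x : valid_word k w -> word_img a b S w (Icc c d) x -> Icc c d x.
Proof.
  destruct w as [|j w]; simpl; auto.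
  intros Hv [Hx _]. apply valid_cons in Hv as [Hj _].
  destruct HB as [_ [_ [_ [_ [_ [_ H7]]]]]]. eauto.
Qed.

Lemma word_surj w y : valid_word k w -> Icc c d y ->
  exists x, word_img a b S w (Icc c d) x /\ Nat.iter (length w) S x = y.
Proof.
  revert y; induction w as [|j w IH]; intros y Hv Hy.
  - exists y; simpl; auto.
  - apply valid_cons in Hv as [Hj Hv].
    destruct (IH y Hv Hy) as [x' [Hx' Hi]].
    assert (HL : Icc c d x') by (eapply word_in_L; eauto).
    destruct HB as [_ [H2 _]]. destruct (proj1 (H2 j Hj x') HL) as [x [Hx Hsx]].
    exists x. split.
    + simpl. split; auto. rewrite Hsx; auto.
    + simpl length. rewrite Nat.iter_succ_r, Hsx; auto.
Qed.

Lemma word_convex w A : valid_word k w -> convex A -> convex (word_img a b S w A).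
Proof.
  induction w as [|j w IH]; intros Hv HA; simpl; auto.
  apply valid_cons in Hv as [Hj Hv]. specialize (IH Hv HA).
  intros x y z [Hx1 Hx2] [Hz1 Hz2] Hy.
  assert (Hy1 : Ij a b j y) by (apply (Ij_convex j x y z); auto).
  split; auto.
  destruct (Req_dec x y) as [<-|Hne1]; auto.
  destruct (Req_dec y z) as [->|Hne2]; auto.
  destruct (br_mono j Hj) as [Hm|Hm].
  - apply (IH (S x) (S y) (S z)); auto.
    split; left; apply Hm; auto; lra.
  - apply (IH (S z) (S y) (S x)); auto.
    split; left; apply Hm; auto; lra.
Qed.

Lemma word_contr w A x y : valid_word k w ->
  word_img a b S w A x -> word_img a b S w A y ->
  Rabs (x - y) * lam ^ (length w) <= Rabs (Nat.iter (length w) S x - Nat.iter (length w) S y).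
Proof.
  revert x y; induction w as [|j w IH]; intros x y Hv Hx Hy.
  - simpl. lra.
  - apply valid_cons in Hv as [Hj Hv]. destruct Hx as [Hx1 Hx2], Hy as [Hy1 Hy2].
    simpl length. rewrite !Nat.iter_succ_r.
    specialize (IH _ _ Hv Hx2 Hy2).
    pose proof (br_exp j x y Hj Hx1 Hy1).
    assert (0 <= lam ^ length w).
    { apply pow_le. destruct HB as [_ [_ [_ [H4 _]]]]. lra. }
    simpl pow.
    apply Rle_trans with (Rabs (S x - S y) * lam ^ length w); auto.
    rewrite <- Rmult_assoc, (Rmult_comm (Rabs _) lam).
    apply Rmult_le_compat_r; auto.
Qed.

Lemma exp_ln_le r t : 0 < r -> ln r <= t -> r <= exp t.
Proof.
  intros Hr H. rewrite <- (exp_ln r) by auto.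
  destruct H as [H|H]; [left; apply exp_increasing; auto|rewrite H; lra].
Qed.

Lemma ratio_bound (M alpha : R) (Hal : 0 < alpha) (HM : 0 <= M)
  (Hhol : forall j x y, (1 <= j <= k)%nat -> Ij a b j x -> Ij a b j y -> x <> y ->
     Rabs (ln (Rabs (dS x) / Rabs (dS y))) <= M * Rpower (Rabs (x - y)) alpha)
  j u z dl : (1 <= j <= k)%nat -> Ij a b j u -> Ij a b j z -> 0 < dl -> Rabs (z - u) <= dl ->
  Rabs (dS z) <= Rabs (dS u) * exp (M * Rpower dl alpha) /\
  Rabs (dS u) <= Rabs (dS z) * exp (M * Rpower dl alpha).
Proof.
  intros Hj Hu Hz Hdl Hzu.
  set (aa := M * Rpower dl alpha).
  assert (Haa : 0 <= aa) by (unfold aa, Rpower; pose proof (exp_pos (alpha * ln dl)); nra).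
  assert (HE : 1 <= exp aa).
  { destruct Haa as [h|h]. left; rewrite <- exp_0; apply exp_increasing; auto. rewrite <- h, exp_0; lra. }
  destruct HB as [_ [_ [H3 [H4 _]]]].
  assert (Pu : 0 < Rabs (dS u)) by (pose proof (H3 j u Hj Hu); lra).
  assert (Pz : 0 < Rabs (dS z)) by (pose proof (H3 j z Hj Hz); lra).
  destruct (Req_dec z u) as [->|Hne]. { split; nra. }
  assert (Hb : Rabs (ln (Rabs (dS z) / Rabs (dS u))) <= aa).
  { eapply Rle_trans. apply (Hhol j z u Hj Hz Hu Hne).
    unfold aa. apply Rmult_le_compat_l; auto. apply Rle_Rpower_l; [lra|].
    split; auto. apply Rabs_pos_lt. lra. }
  assert (Hr : 0 < Rabs (dS z) / Rabs (dS u)) by (apply Rdiv_lt_0_compat; auto).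
  split.
  - assert (Rabs (dS z) / Rabs (dS u) <= exp aa).
    { apply exp_ln_le; auto. pose proof (Rle_abs (ln (Rabs (dS z) / Rabs (dS u)))); lra. }
    apply (Rmult_le_compat_r (Rabs (dS u))) in H; [|lra].
    replace (Rabs (dS z) / Rabs (dS u) * Rabs (dS u)) with (Rabs (dS z)) in H by (field; lra).
    lra.
  - assert (Rabs (dS u) / Rabs (dS z) <= exp aa).
    { apply exp_ln_le. apply Rdiv_lt_0_compat; auto.
      replace (Rabs (dS u) / Rabs (dS z)) with (/ (Rabs (dS z) / Rabs (dS u))) by (field; lra).
      rewrite ln_Rinv by auto.
      pose proof (Rabs_Ropp (ln (Rabs (dS z) / Rabs (dS u)))).
      pose proof (Rle_abs (- ln (Rabs (dS z) / Rabs (dS u)))). lra. }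
    apply (Rmult_le_compat_r (Rabs (dS z))) in H; [|lra].
    replace (Rabs (dS u) / Rabs (dS z) * Rabs (dS z)) with (Rabs (dS u)) in H by (field; lra).
    lra.
Qed.

Lemma between_close u x y z dl : Rmin x y <= z <= Rmax x y ->
  Rabs (x - u) <= dl -> Rabs (y - u) <= dl -> Rabs (z - u) <= dl.
Proof.
  intros Hz Hx Hy. unfold Rmin, Rmax in Hz. revert Hx Hy.
  destruct Rle_dec; unfold Rabs; repeat destruct Rcase_abs; lra.
Qed.

Lemma one_step (M alpha : R) (Hal : 0 < alpha) (HM : 0 <= M)
  (Hhol : forall j x y, (1 <= j <= k)%nat -> Ij a b j x -> Ij a b j y -> x <> y ->
     Rabs (ln (Rabs (dS x) / Rabs (dS y))) <= M * Rpower (Rabs (x - y)) alpha)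
  j u v x y dl : (1 <= j <= k)%nat -> Ij a b j u -> Ij a b j v -> Ij a b j x -> Ij a b j y ->
  0 < dl -> Rabs (v - u) <= dl -> Rabs (x - u) <= dl -> Rabs (y - u) <= dl ->
  Rabs (u - v) * Rabs (S x - S y) <=
    exp (2 * (M * Rpower dl alpha)) * Rabs (S u - S v) * Rabs (x - y).
Proof.
  intros Hj Hu Hv Hx Hy Hdl Hvu Hxu Hyu.
  set (E := exp (M * Rpower dl alpha)).
  assert (HE2 : exp (2 * (M * Rpower dl alpha)) = E * E).
  { unfold E; rewrite <- exp_plus; f_equal; ring. }
  rewrite HE2.
  assert (HEp : 0 < E) by apply exp_pos.
  destruct (br_mvt j y x Hj Hy Hx) as [z [Hz1 [Hz2 Hz3]]].
  destruct (br_mvt j v u Hj Hv Hu) as [w [Hw1 [Hw2 Hw3]]].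
  rewrite Hz3, Hw3.
  assert (Hzu : Rabs (z - u) <= dl) by (apply (between_close u y x z dl); auto).
  assert (Hwu : Rabs (w - u) <= dl) by (apply (between_close u v u w dl); auto;
     rewrite Rminus_diag, Rabs_R0; lra).
  destruct (ratio_bound M alpha Hal HM Hhol j u z dl Hj Hu Hz2 Hdl Hzu) as [A1 _].
  destruct (ratio_bound M alpha Hal HM Hhol j u w dl Hj Hu Hw2 Hdl Hwu) as [_ A2].
  fold E in A1, A2.
  pose proof (Rabs_pos (u - v)). pose proof (Rabs_pos (x - y)).
  pose proof (Rabs_pos (dS u)). pose proof (Rabs_pos (dS z)).
  apply Rle_trans with (Rabs (u - v) * (Rabs (dS u) * E * Rabs (x - y))).
  { apply Rmult_le_compat_l; auto. apply Rmult_le_compat_r; auto. }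
  apply Rle_trans with (Rabs (u - v) * (Rabs (dS w) * E * E * Rabs (x - y))).
  { apply Rmult_le_compat_l; auto. apply Rmult_le_compat_r; auto.
    apply Rmult_le_compat_r; lra. }
  right; ring.
Qed.

Fixpoint Ks (M alpha : R) (n : nat) : R :=
  match n with
  | O => 0
  | Datatypes.S n' => Ks M alpha n' + 2 * (M * Rpower ((d - c) / lam ^ n) alpha)
  end.

Lemma word_dist (M alpha : R) (Hal : 0 < alpha) (HM : 0 <= M)
  (Hhol : forall j x y, (1 <= j <= k)%nat -> Ij a b j x -> Ij a b j y -> x <> y ->
     Rabs (ln (Rabs (dS x) / Rabs (dS y))) <= M * Rpower (Rabs (x - y)) alpha)
  w : valid_word k w -> forall u v x y,
  word_img a b S w (Icc c d) u -> word_img a b S w (Icc c d) v ->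
  word_img a b S w (Icc c d) x -> word_img a b S w (Icc c d) y ->
  Rabs (u - v) * Rabs (Nat.iter (length w) S x - Nat.iter (length w) S y) <=
    exp (Ks M alpha (length w)) * Rabs (Nat.iter (length w) S u - Nat.iter (length w) S v)
      * Rabs (x - y).
Proof.
  induction w as [|j w IH]; intros Hv u v x y Hu Hv' Hx Hy.
  - simpl. rewrite exp_0. lra.
  - assert (Hvw := Hv). apply valid_cons in Hv as [Hj Hv].
    destruct HB as [_ [_ [_ [Hlam [Hcd _]]]]].
    set (n := length (j :: w)).
    assert (Hln : 0 < lam ^ n) by (apply pow_lt; lra).
    set (dl := (d - c) / lam ^ n).
    assert (Hdl : 0 < dl) by (unfold dl; apply Rdiv_lt_0_compat; lra).
    assert (Hclose : forall p q, word_img a b S (j :: w) (Icc c d) p ->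
       word_img a b S (j :: w) (Icc c d) q -> Rabs (q - p) <= dl).
    { intros p q Hp Hq. pose proof (word_contr (j :: w) _ q p Hvw Hq Hp).
      pose proof (word_iter _ _ _ Hp). pose proof (word_iter _ _ _ Hq).
      fold n in H, H0, H1. unfold Icc in H0, H1.
      assert (Rabs (Nat.iter n S q - Nat.iter n S p) <= d - c)
        by (unfold Rabs; destruct Rcase_abs; lra).
      unfold dl. apply (Rmult_le_reg_r (lam ^ n)); auto.
      unfold Rdiv; rewrite Rmult_assoc, Rinv_l by lra. lra. }
    pose proof (one_step M alpha Hal HM Hhol j u v x y dl Hj (proj1 Hu) (proj1 Hv')
      (proj1 Hx) (proj1 Hy) Hdl (Hclose _ _ Hu Hv') (Hclose _ _ Hu Hx) (Hclose _ _ Hu Hy)) as H1.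
    specialize (IH Hv (S u) (S v) (S x) (S y) (proj2 Hu) (proj2 Hv') (proj2 Hx) (proj2 Hy)).
    unfold n. simpl length. rewrite !Nat.iter_succ_r.
    change (Ks M alpha (Datatypes.S (length w))) with (Ks M alpha (length w) + 2 * (M * Rpower dl alpha)).
    set (X := Rabs (S x - S y)) in *.
    set (U := Rabs (S u - S v)) in *.
    set (Xn := Rabs (Nat.iter (length w) S (S x) - Nat.iter (length w) S (S y))) in *.
    set (Un := Rabs (Nat.iter (length w) S (S u) - Nat.iter (length w) S (S v))) in *.
    set (e1 := exp (Ks M alpha (length w))) in *.
    set (e2 := exp (2 * (M * Rpower dl alpha))) in *.
    assert (He : exp (Ks M alpha (length w) + 2 * (M * Rpower dl alpha)) = e1 * e2)
      by (unfold e1, e2; apply exp_plus).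
    rewrite He.
    assert (0 <= Xn) by apply Rabs_pos. assert (0 <= Un) by apply Rabs_pos.
    assert (0 <= Rabs (u - v)) by apply Rabs_pos. assert (0 <= Rabs (x - y)) by apply Rabs_pos.
    assert (0 < e1) by apply exp_pos. assert (0 < e2) by apply exp_pos.
    assert (0 <= U) by apply Rabs_pos.
    destruct (Rle_lt_or_eq_dec 0 X (Rabs_pos _)) as [HX|HX].
    + apply (Rmult_le_reg_r X); auto.
      apply Rle_trans with (e2 * U * Rabs (x - y) * Xn).
      { replace (Rabs (u - v) * Xn * X) with (Rabs (u - v) * X * Xn) by ring.
        apply Rmult_le_compat_r; auto. }
      apply Rle_trans with (e2 * Rabs (x - y) * (e1 * Un * X)).
      { replace (e2 * U * Rabs (x - y) * Xn) with (e2 * Rabs (x - y) * (U * Xn)) by ring.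
        apply Rmult_le_compat_l; auto. apply Rmult_le_pos; lra. }
      right; ring.
    + pose proof (br_exp j x y Hj (proj1 Hx) (proj1 Hy)) as Hbe.
      change (lam * Rabs (x - y) <= X) in Hbe.
      assert (Hxy0 : Rabs (x - y) = 0) by (rewrite <- HX in Hbe; pose proof (Rabs_pos (x - y)); nra).
      assert (x = y).
      { destruct (Req_dec x y) as [|Hn]; auto. exfalso. assert (Hn2 : x - y <> 0) by lra.
        pose proof (Rabs_no_R0 _ Hn2). lra. }
      subst y. unfold Xn. rewrite Rminus_diag, Rabs_R0. rewrite Hxy0. lra.
Qed.

Lemma Rpow_geo alpha n : Rpower ((d - c) / lam ^ n) alpha =
  Rpower (d - c) alpha * Rpower (/ lam) alpha ^ n.
Proof.
  destruct HB as [_ [_ [_ [Hlam [Hcd _]]]]].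
  induction n as [|n IH].
  - simpl. rewrite Rdiv_1_r. ring.
  - replace ((d - c) / lam ^ Datatypes.S n) with (((d - c) / lam ^ n) * / lam).
    2: { simpl. field. split; [apply pow_nonzero|]; lra. }
    rewrite <- Rpower_mult_distr.
    + rewrite IH. simpl. ring.
    + apply Rdiv_lt_0_compat; [lra|apply pow_lt; lra].
    + apply Rinv_0_lt_compat; lra.
Qed.

Lemma q_bounds alpha : 0 < alpha -> 0 < Rpower (/ lam) alpha < 1.
Proof.
  intros Hal. destruct HB as [_ [_ [_ [Hlam _]]]].
  unfold Rpower. split; [apply exp_pos|].
  rewrite <- exp_0. apply exp_increasing.
  rewrite ln_Rinv by lra.
  assert (0 < ln lam) by (rewrite <- ln_1; apply ln_increasing; lra).
  nra.
Qed.

Lemma Ks_bound M alpha n : 0 < alpha -> 0 <= M ->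
  Ks M alpha n <= 2 * M * Rpower (d - c) alpha * Rpower (/ lam) alpha / (1 - Rpower (/ lam) alpha).
Proof.
  intros Hal HM. destruct (q_bounds alpha Hal) as [Hq0 Hq1].
  set (q := Rpower (/ lam) alpha) in *.
  set (C0 := Rpower (d - c) alpha).
  assert (HC0 : 0 < C0) by (unfold C0, Rpower; apply exp_pos).
  assert (E : Ks M alpha n = 2 * M * C0 * q * (1 - q ^ n) / (1 - q)).
  { induction n as [|n IH].
    - simpl. field. lra.
    - change (Ks M alpha (Datatypes.S n)) with
        (Ks M alpha n + 2 * (M * Rpower ((d - c) / lam ^ (Datatypes.S n)) alpha)).
      rewrite IH, Rpow_geo. fold q. fold C0. simpl. field. lra. }
  rewrite E. unfold Rdiv. apply Rmult_le_compat_r. { apply Rlt_le, Rinv_0_lt_compat; lra. }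
  assert (0 <= q ^ n) by (apply pow_le; lra).
  assert (0 <= 2 * M * C0 * q) by (repeat apply Rmult_le_pos; lra).
  nra.
Qed.
End W.

Fixpoint gm (a b : nat -> R) (n : nat) : R :=
  match n with
  | O => 1
  | Datatypes.S n' => Rmin (a (Datatypes.S n) - b n) (gm a b n')
  end.

Lemma gm_pos a b n : (forall j, (1 <= j <= n)%nat -> 0 < a (Datatypes.S j) - b j) -> 0 < gm a b n.
Proof.
  induction n as [|n IH]; intros H; simpl; [lra|].
  apply Rmin_pos. apply H; lia. apply IH; intros; apply H; lia.
Qed.

Lemma gm_le a b n j : (1 <= j <= n)%nat -> gm a b n <= a (Datatypes.S j) - b j.
Proof.
  induction n as [|n IH]; intros H; [lia|]. simpl.
  destruct (Nat.eq_dec j (Datatypes.S n)) as [->|Hn].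
  - apply Rmin_l.
  - eapply Rle_trans; [apply Rmin_r|]. apply IH; lia.
Qed.

Lemma chain k a b c d : setting k a b c d ->
  forall j, (2 <= j <= k)%nat -> b 1%nat <= a j.
Proof.
  intros [Hk [H1 [H2 _]]].
  induction j as [|j IH]; intros Hj; [lia|].
  destruct (Nat.eq_dec j 1) as [->|Hn].
  - left; apply H2; lia.
  - assert (b 1%nat <= a j) by (apply IH; lia).
    pose proof (H1 j ltac:(lia)). pose proof (H2 j ltac:(lia)). lra.
Qed.

Lemma width_bound k a b c d : setting k a b c d ->
  forall j, (1 <= j <= k)%nat -> b j - a j <= d - c - Rmin (b 1%nat - a 1%nat) (b 2%nat - a 2%nat).
Proof.
  intros Hs j Hj. pose proof (chain k a b c d Hs) as Hc.
  destruct Hs as [Hk [H1 [H2 [_ [_ [_ [_ [_ H9]]]]]]]].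
  destruct (Nat.eq_dec j 1) as [->|Hn].
  - pose proof (H9 2%nat ltac:(lia)). pose proof (H9 1%nat ltac:(lia)).
    pose proof (H2 1%nat ltac:(lia)). pose proof (Rmin_r (b 1%nat - a 1%nat) (b 2%nat - a 2%nat)). lra.
  - pose proof (H9 j Hj). pose proof (H9 1%nat ltac:(lia)). pose proof (Hc j ltac:(lia)).
    pose proof (Rmin_l (b 1%nat - a 1%nat) (b 2%nat - a 2%nat)). lra.
Qed.

Theorem lemma3 (k : nat) (a b : nat -> R) (c d : R)
  (Hset : setting k a b c d) (M alpha : R) (HM : 0 < M) (Halpha : 0 < alpha) :
  exists (eps0 : R) (l : nat), 0 < eps0 /\
    forall (eps : R) (S dS : R -> R), eps < eps0 ->
      in_class_A k a b c d M eps alpha S dS ->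
      forall (js : list nat), valid_word k js -> (1 <= length js)%nat ->
      let T := word_img a b S js (Icc c d) in
      forall (F dF : R -> R),
        C1_on T F dF ->
        (forall x, T x -> dF x <> 0) ->
        (forall x, T x -> Icc c d (F x)) ->
        (exists s, s < 1/2 /\ forall x y, T x -> T y ->
           ln (Rabs (dF x) / Rabs (dF y)) <= s) ->
        (forall C, conn_comp (setminus T (CS k a b S)) C ->
           exists D, conn_comp (setminus (Icc c d) (CS k a b S)) D /\
             maps_onto F C D) ->
        forall (is_ : list nat) (i j : nat),
          valid_word k is_ ->
          (1 <= i <= k - 1)%nat -> (1 <= j <= k - 1)%nat ->
          subset (word_img a b S (js ++ is_) (Jgap a b i)) T ->
          maps_onto F (word_img a b S (js ++ is_) (Jgap a b i)) (Jgap a b j) ->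
          (length is_ <= l)%nat.
Proof.
  pose proof (width_bound k a b c d Hset) as Hwid.
  assert (Hset' := Hset).
  destruct Hset' as [Hk [H1 [H2 [_ [_ [_ [_ [_ H9]]]]]]]].
  set (dl := Rmin (b 1%nat - a 1%nat) (b 2%nat - a 2%nat)) in *.
  assert (Hdl : 0 < dl) by (apply Rmin_pos; [pose proof (H1 1%nat ltac:(lia))|pose proof (H1 2%nat ltac:(lia))]; lra).
  assert (Hcd : c < d) by (pose proof (H9 1%nat ltac:(lia)); pose proof (H1 1%nat ltac:(lia)); lra).
  assert (Hw1 : 0 < d - c - dl) by (pose proof (Hwid 1%nat ltac:(lia)); pose proof (H1 1%nat ltac:(lia)); lra).
  set (R0 := (d - c) / (d - c - dl)).
  assert (HR0 : 1 < R0).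
  { unfold R0. apply (Rmult_lt_reg_r (d - c - dl)); auto. unfold Rdiv.
    rewrite Rmult_assoc, Rinv_l by lra. lra. }
  set (eps0 := ln R0 / 2).
  assert (Heps0 : 0 < eps0). { unfold eps0. pose proof (ln_increasing 1 R0 ltac:(lra) HR0) as Hl. rewrite ln_1 in Hl. lra. }
  set (lam := exp eps0).
  assert (Hlam : 1 < lam) by (unfold lam; rewrite <- exp_0; apply exp_increasing; auto).
  assert (HR0e : R0 = lam * lam).
  { unfold lam. rewrite <- exp_plus. replace (eps0 + eps0) with (ln R0) by (unfold eps0; field).
    rewrite exp_ln; lra. }
  set (gmin := gm a b (k - 1)).
  assert (Hgmin : 0 < gmin).
  { apply gm_pos. intros j0 Hj0. pose proof (H2 j0 ltac:(lia)). lra. }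
  set (q := Rpower (/ lam) alpha).
  set (Kb := 2 * M * Rpower (d - c) alpha * q / (1 - q)).
  set (e2 := exp (1/2)).
  set (Cfin := 2 * e2 * e2 * exp Kb * (d - c) / gmin).
  destruct (Pow_x_infinity lam ltac:(rewrite Rabs_pos_eq; lra) (Cfin + 1)) as [N HN].
  exists eps0, N. split; auto.
  intros eps S dS Heps [HS1 [Hdist Hhol]] js Hjs Hlen T F dF HF1 HFnz HFL HFdist _
    is_ i j His Hi Hj Hsub Honto.
  assert (HB : branches k a b c d S dS lam).
  { unfold branches.
    assert (HIL : forall j0 x, (1 <= j0 <= k)%nat -> Ij a b j0 x -> Icc c d x).
    { intros j0 x Hj0 Hx. pose proof (H9 j0 Hj0). unfold Ij, Icc in *. lra. }
    split; [intros j0 Hj0; apply (HS1 j0 Hj0)|].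
    split; [intros j0 Hj0; apply (HS1 j0 Hj0)|].
    split.
    2: { split; auto. split; auto. split; auto. intros j0 Hj0; pose proof (H1 j0 Hj0); lra. }
    intros j0 x Hj0 Hx.
    destruct (HS1 j0 Hj0) as [HC1 [_ [Hon Hgt]]].
    destruct (proj1 (Hon c) ltac:(unfold Icc; lra)) as [u [Hu Hsu]].
    destruct (proj1 (Hon d) ltac:(unfold Icc; lra)) as [v [Hv Hsv]].
    destruct (mvt_abs (Ij a b j0) S dS u v (Icc_convex _ _) Hu Hv (proj1 HC1)) as [z [_ [Hz Heq]]].
    rewrite Hsu, Hsv in Heq. rewrite Rabs_pos_eq in Heq by lra.
    assert (Hvu : Rabs (v - u) <= d - c - dl).
    { pose proof (Hwid j0 Hj0). unfold Ij, Icc in Hu, Hv. unfold Rabs; destruct Rcase_abs; lra. }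
    destruct Hdist as [s [Hs Hsb]].
    specialize (Hsb j0 z x Hj0 Hz Hx).
    pose proof (Hgt z Hz). pose proof (Hgt x Hx).
    assert (Hr : Rabs (dS z) / Rabs (dS x) <= exp eps0).
    { eapply Rle_trans. apply exp_ln_le; [apply Rdiv_lt_0_compat; lra|exact Hsb].
      left; apply exp_increasing; lra. }
    fold lam in Hr.
    assert (Hr2 : Rabs (dS z) <= lam * Rabs (dS x)).
    { apply (Rmult_le_compat_r (Rabs (dS x))) in Hr; [|lra].
      replace (Rabs (dS z) / Rabs (dS x) * Rabs (dS x)) with (Rabs (dS z)) in Hr by (field; lra).
      lra. }
    assert (Hdc : d - c = R0 * (d - c - dl)) by (unfold R0; field; lra).
    rewrite HR0e in Hdc.
    pose proof (Rabs_pos (v - u)).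
    assert (Hfin : d - c <= lam * Rabs (dS x) * (d - c - dl)).
    { apply Rle_trans with (Rabs (dS z) * Rabs (v - u)); [lra|].
      apply Rle_trans with (Rabs (dS z) * (d - c - dl)).
      - apply Rmult_le_compat_l; [apply Rabs_pos|auto].
      - apply Rmult_le_compat_r; lra. }
    assert (Hq : lam * (d - c - dl) * lam <= lam * (d - c - dl) * Rabs (dS x)) by nra.
    apply Rmult_le_reg_l in Hq; [lra|]. nra. }

  assert (HJL : forall y, Jgap a b i y -> Icc c d y).
  { intros y Hy. destruct (H9 i ltac:(lia)) as [h1 h2]. destruct (H9 (Datatypes.S i) ltac:(lia)) as [h3 h4].
    pose proof (H1 i ltac:(lia)). pose proof (H1 (Datatypes.S i) ltac:(lia)). unfold Jgap in Hy. unfold Icc. lra. }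
  set (A := word_img a b S is_ (Jgap a b i)).
  assert (HG : forall x, word_img a b S (js ++ is_) (Jgap a b i) x <-> word_img a b S js A x).
  { intros x. unfold A, word_img. rewrite fold_right_app. tauto. }
  assert (HAL : forall y, A y -> Icc c d y).
  { intros y Hy. apply (word_in_L k a b c d S dS lam HB is_); auto.
    eapply word_mono; [|exact Hy]. auto. }
  set (g := a (Datatypes.S j) - b j).
  assert (Hg : gmin <= g) by (apply gm_le; lia).
  destruct (proj1 (Honto (b j + g / 4)) ltac:(unfold Jgap; unfold g in *; lra)) as [u [Hu Fu]].
  destruct (proj1 (Honto (b j + 3 * g / 4)) ltac:(unfold Jgap; unfold g in *; lra)) as [v [Hv Fv]].
  assert (HuT : T u) by (apply Hsub; auto).
  assert (HvT : T v) by (apply Hsub; auto).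
  apply HG in Hu. apply HG in Hv.
  destruct (word_surj k a b c d S dS lam HB js c Hjs ltac:(unfold Icc; lra)) as [x [HxT Hx]].
  destruct (word_surj k a b c d S dS lam HB js d Hjs ltac:(unfold Icc; lra)) as [y [HyT Hy]].
  fold T in HxT, HyT.
  assert (HTc : convex T) by (apply word_convex with k c d dS lam; auto; apply Icc_convex).
  set (m := length js) in *. set (p := length is_).
  assert (HuL : word_img a b S js (Icc c d) u) by (eapply word_mono; [|exact Hu]; auto).
  assert (HvL : word_img a b S js (Icc c d) v) by (eapply word_mono; [|exact Hv]; auto).
  pose proof (word_dist k a b c d S dS lam HB M alpha Halpha ltac:(lra) Hhol js Hjs u v x y HuL HvL HxT HyT)
    as Hdist1.
  fold m in Hdist1. rewrite Hx, Hy in Hdist1.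
  replace (Rabs (c - d)) with (d - c) in Hdist1 by (rewrite Rabs_minus_sym, Rabs_pos_eq; lra).
  assert (HKs : exp (Ks c d lam M alpha m) <= exp Kb).
  { pose proof (Ks_bound k a b c d S dS lam HB M alpha m Halpha ltac:(lra)) as Hk2.
    fold q in Hk2. fold Kb in Hk2. destruct Hk2 as [Hk2|Hk2]; [left; apply exp_increasing; auto|rewrite Hk2; lra]. }
  pose proof (word_iter a b S js A u Hu) as HAu. pose proof (word_iter a b S js A v Hv) as HAv.
  fold m in HAu, HAv.
  pose proof (word_contr k a b c d S dS lam HB is_ (Jgap a b i) _ _ His HAu HAv) as Hc1.
  fold p in Hc1.
  pose proof (word_iter a b S is_ _ _ HAu) as HJu. pose proof (word_iter a b S is_ _ _ HAv) as HJv.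
  fold p in HJu, HJv. apply HJL in HJu. apply HJL in HJv.
  assert (Hc2 : Rabs (Nat.iter p S (Nat.iter m S u) - Nat.iter p S (Nat.iter m S v)) <= d - c)
    by (unfold Icc in HJu, HJv; unfold Rabs; destruct Rcase_abs; lra).
  destruct HFdist as [s [Hs Hsb]].
  assert (HD0 : 0 < Rabs (dF x)) by (apply Rabs_pos_lt; apply HFnz; auto).
  assert (He2 : exp s <= e2) by (unfold e2; left; apply exp_increasing; lra).
  assert (Hup : forall z, T z -> Rabs (dF z) <= e2 * Rabs (dF x)).
  { intros z Hz. assert (0 < Rabs (dF z)) by (apply Rabs_pos_lt; apply HFnz; auto).
    assert (Rabs (dF z) / Rabs (dF x) <= e2).
    { eapply Rle_trans; [apply exp_ln_le; [apply Rdiv_lt_0_compat; lra|apply Hsb; auto]|auto]. }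
    apply (Rmult_le_compat_r (Rabs (dF x))) in H0; [|lra].
    replace (Rabs (dF z) / Rabs (dF x) * Rabs (dF x)) with (Rabs (dF z)) in H0 by (field; lra). lra. }
  assert (Hlo : forall z, T z -> Rabs (dF x) <= e2 * Rabs (dF z)).
  { intros z Hz. assert (0 < Rabs (dF z)) by (apply Rabs_pos_lt; apply HFnz; auto).
    assert (Rabs (dF x) / Rabs (dF z) <= e2).
    { eapply Rle_trans; [apply exp_ln_le; [apply Rdiv_lt_0_compat; lra|apply Hsb; auto]|auto]. }
    apply (Rmult_le_compat_r (Rabs (dF z))) in H0; [|lra].
    replace (Rabs (dF x) / Rabs (dF z) * Rabs (dF z)) with (Rabs (dF x)) in H0 by (field; lra). lra. }
  destruct (mvt_abs T F dF u v HTc HuT HvT (proj1 HF1)) as [xi [_ [Hxi Hmu]]].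
  rewrite Fu, Fv in Hmu.
  replace (Rabs (b j + 3 * g / 4 - (b j + g / 4))) with (g / 2) in Hmu
    by (rewrite Rabs_pos_eq; [field|]; unfold g; pose proof (H2 j ltac:(lia)); lra).
  destruct (mvt_abs T F dF x y HTc HxT HyT (proj1 HF1)) as [eta [_ [Heta Hmx]]].
  assert (HFxy : Rabs (F y - F x) <= d - c).
  { pose proof (HFL x HxT). pose proof (HFL y HyT). unfold Icc in *. unfold Rabs; destruct Rcase_abs; lra. }
  set (P := lam ^ p) in *.
  set (W := Rabs (Nat.iter m S u - Nat.iter m S v)) in *.
  set (D0 := Rabs (dF x)) in *.
  set (K := exp (Ks c d lam M alpha m)) in *.
  assert (HP : 0 < P) by (apply pow_lt; lra).
  assert (Hdc : 0 < d - c) by lra.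
  pose proof (Rabs_pos (u - v)). pose proof (Rabs_pos (x - y)).
  assert (HK0 : 0 < K) by apply exp_pos.
  assert (He2p : 0 < e2) by apply exp_pos.
  assert (S1 : Rabs (u - v) * P <= K * Rabs (x - y)).
  { apply (Rmult_le_reg_r (d - c)); auto.
    apply Rle_trans with (K * W * Rabs (x - y) * P).
    { replace (Rabs (u - v) * P * (d - c)) with (Rabs (u - v) * (d - c) * P) by ring.
      apply Rmult_le_compat_r; lra. }
    replace (K * W * Rabs (x - y) * P) with (K * Rabs (x - y) * (W * P)) by ring.
    apply Rmult_le_compat_l. apply Rmult_le_pos; lra.
    eapply Rle_trans; [exact Hc1|exact Hc2]. }
  assert (S2 : g / 2 <= e2 * D0 * Rabs (u - v)).
  { rewrite Hmu, Rabs_minus_sym. apply Rmult_le_compat_r; auto. }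
  assert (S3 : D0 * Rabs (x - y) <= e2 * (d - c)).
  { apply Rle_trans with (e2 * Rabs (dF eta) * Rabs (x - y)).
    { apply Rmult_le_compat_r; auto. }
    rewrite Rmult_assoc, <- Rabs_minus_sym, <- Hmx. apply Rmult_le_compat_l; lra. }
  assert (S4 : g / 2 * P <= e2 * e2 * K * (d - c)).
  { apply Rle_trans with (e2 * D0 * (Rabs (u - v) * P)).
    { rewrite <- Rmult_assoc. apply Rmult_le_compat_r; lra. }
    apply Rle_trans with (e2 * D0 * (K * Rabs (x - y))).
    { apply Rmult_le_compat_l; [apply Rmult_le_pos; lra|auto]. }
    replace (e2 * D0 * (K * Rabs (x - y))) with (e2 * K * (D0 * Rabs (x - y))) by ring.
    replace (e2 * e2 * K * (d - c)) with (e2 * K * (e2 * (d - c))) by ring.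
    apply Rmult_le_compat_l; [apply Rmult_le_pos; lra|auto]. }
  assert (S5 : P <= Cfin).
  { unfold Cfin. apply (Rmult_le_reg_r (gmin / 2)). lra.
    apply Rle_trans with (g / 2 * P).
    { rewrite Rmult_comm. apply Rmult_le_compat_r; lra. }
    apply Rle_trans with (e2 * e2 * K * (d - c)); auto.
    replace (2 * e2 * e2 * exp Kb * (d - c) / gmin * (gmin / 2)) with (e2 * e2 * exp Kb * (d - c))
      by (field; lra).
    apply Rmult_le_compat_r; [lra|]. apply Rmult_le_compat_l; auto.
    apply Rmult_le_pos; lra. }
  destruct (Compare_dec.le_lt_dec p N) as [Hle|Hlt]; auto.
  exfalso. specialize (HN p ltac:(lia)). fold P in HN. rewrite Rabs_pos_eq in HN by lra. lra.
Qed.
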